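(* The left-join operator $⟕_F$ of the W3C SPARQL algebra is expressible in the core SPARQL algebra. That is, there is an expression built only from projection, selection, join, union and simple difference which, for every selection formula $F$ and all multisets of mappings $\Omega_1,\Omega_2$, evaluates to $\Omega_1 \,⟕_F\, \Omega_2$, with the same multiplicities.
   Context: Fix pairwise disjoint infinite sets $I$ (IRIs), $L$ (literals) and $V$ (variables), and let $T=I\cup L$. Solution mappings. A mapping is a partial function $\mu:V\to T$ with domain $\operatorname{dom}(\mu)$. Mappings $\mu_1,\mu_2$ are compatible ($\mu_1\sim\mu_2$) if they agree on every variable in $\operatorname{dom}(\mu_1)\cap\operatorname{dom}(\mu_2)$; then $\mu_1\cup\mu_2$ is a mapping. The restriction $\mu_{|W}$ of $\mu$ to $W\subseteq V$ is $\mu$ restricted to $\operatorname{dom}(\mu)\cap W$. Selection formulas. The atomic ones are $(?X=c)$, $(?X=?Y)$ and $\operatorname{bound}(?X)$, for $?X,?Y\in V$ and $c\in I\cup L$; they are closed under $\land$, $\lor$ and $\neg$. The value $\mu(F)\in\{\mathit{true},\mathit{false},\mathit{error}\}$ is defined as follows. - $(?X=c)$ and $(?X=?Y)$ are $\mathit{error}$ if some mentioned variable is outside $\operatorname{dom}(\mu)$; otherwise they are $\mathit{true}$ or $\mathit{false}$ according to equality. - $\operatorname{bound}(?X)$ is $\mathit{true}$ iff $?X\in\operatorname{dom}(\mu)$, and $\mathit{false}$ otherwise. - $\land$ is $\mathit{false}$ if some argument is $\mathit{false}$; else $\mathit{error}$ if some argument is $\mathit{error}$; else $\mathit{true}$.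 - $\lor$ is $\mathit{true}$ if some argument is $\mathit{true}$; else $\mathit{error}$ if some argument is $\mathit{error}$; else $\mathit{false}$. - $\neg$ swaps $\mathit{true}$ and $\mathit{false}$ and keeps $\mathit{error}$. Multisets. A multiset $\Omega$ of mappings assigns multiplicities $\mathrm{card}_\Omega(\mu)\ge0$. Operations, for multisets $\Omega_1,\Omega_2$. - Projection: $\pi_W(\Omega_1)$ is the multiset of restrictions $\mu_{|W}$ for $\mu\in\Omega_1$, with multiplicities summed. - Selection: $\sigma_F(\Omega_1)$ keeps the $\mu\in\Omega_1$ with $\mu(F)=\mathit{true}$, with multiplicities kept. - Join: $\Omega_1\Join\Omega_2$ is the multiset of $\mu_1\cup\mu_2$ for compatible $\mu_1\in\Omega_1$, $\mu_2\in\Omega_2$, where $\mathrm{card}(\mu)=\sum_{\mu=\mu_1\cup\mu_2}\mathrm{card}_{\Omega_1}(\mu_1)\,\mathrm{card}_{\Omega_2}(\mu_2)$. - Union: $\Omega_1\cup\Omega_2$, with multiplicities added. - Difference: $\Omega_1\setminus_F\Omega_2=\{\mu_1\in\Omega_1\mid\forall\mu_2\in\Omega_2,\ \mu_1\nsim\mu_2\lor(\mu_1\sim\mu_2\land(\mu_1\cup\mu_2)(F)=\mathit{false})\}$, with multiplicities as in $\Omega_1$. - Left-join: $\Omega_1\,⟕_F\,\Omega_2=\sigma_F(\Omega_1\Join\Omega_2)\cup(\Omega_1\setminus_F\Omega_2)$, with multiplicities added. - Simple difference: $\Omega_1\setminus\Omega_2=\{\mu_1\in\Omega_1\mid\forall\mu_2\in\Omega_2,\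 \mu_1\nsim\mu_2\}$, with multiplicities as in $\Omega_1$. The core SPARQL algebra consists of projection, selection, join, union and simple difference. An operator $O$ is expressible in a language $L$ iff some subset of the operators of $L$ can express the same queries as $O$. *)

(* Defs.v *)
(* SPARQL multiset algebra (W3C semantics) over abstract
   IRIs I, literals L, variables V.  Terms T = I + L (disjoint union). *)
From Stdlib Require Import List Classical ClassicalEpsilon.
Import ListNotations.
Set Implicit Arguments.

Definition infinite_type (X : Type) : Prop :=
  exists f : nat -> X, forall n m, f n = f m -> n = m.

Definition dec (P : Prop) : bool :=
  if excluded_middle_informative P then true else false.

Section Sparql.
Variables (I L V : Type).

Definition term := (I + L)%type.

Definition mapping := V -> option term.

Definition in_dom (m : mapping) (x : V) : Prop := m x <> None.

Definition compatible (m1 m2 : mapping) : Prop :=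
  forall x t1 t2, m1 x = Some t1 -> m2 x = Some t2 -> t1 = t2.

(** union of mappings (meaningful for compatible mappings) *)
Definition munion (m1 m2 : mapping) : mapping :=
  fun x => match m1 x with Some t => Some t | None => m2 x end.

Definition restrict (W : V -> Prop) (m : mapping) : mapping :=
  fun x => if dec (W x) then m x else None.

Inductive formula : Type :=
| FEqC   : V -> term -> formula
| FEqV   : V -> V -> formula
| FBound : V -> formula
| FAnd   : formula -> formula -> formula
| FOr    : formula -> formula -> formula
| FNot   : formula -> formula.

Inductive tv : Type := TTrue | TFalse | TError.

Definition tand (a b : tv) : tv :=
  match a, b with
  | TFalse, _ | _, TFalse => TFalse
  | TError, _ | _, TError => TError
  | TTrue, TTrue => TTrue
  end.

Definition tor (a b : tv) : tv :=
  match a, b with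
  | TTrue, _ | _, TTrue => TTrue
  | TError, _ | _, TError => TError
  | TFalse, TFalse => TFalse
  end.

Definition tnot (a : tv) : tv :=
  match a with TTrue => TFalse | TFalse => TTrue | TError => TError end.

Fixpoint feval (m : mapping) (F : formula) : tv :=
  match F with
  | FEqC x c =>
      match m x with
      | None => TError
      | Some t => if dec (t = c) then TTrue else TFalse
      end
  | FEqV x y =>
      match m x, m y with
      | Some t, Some u => if dec (t = u) then TTrue else TFalse
      | _, _ => TError
      end
  | FBound x => match m x with Some _ => TTrue | None => TFalse end
  | FAnd F1 F2 => tand (feval m F1) (feval m F2)
  | FOr F1 F2 => tor (feval m F1) (feval m F2)
  | FNot F1 => tnot (feval m F1)
  end.

(** Finite multisets of mappings, represented by lists; the multiplicity of
    a mapping is its number of occurrences. *)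
Definition mset := list mapping.

Definition card (O : mset) (m : mapping) : nat :=
  length (filter (fun n => dec (n = m)) O).

Definition mset_eq (O1 O2 : mset) : Prop := forall m, card O1 m = card O2 m.

Definition proj (W : V -> Prop) (O : mset) : mset := map (restrict W) O.

Definition sel (F : formula) (O : mset) : mset :=
  filter (fun m => dec (feval m F = TTrue)) O.

Definition join (O1 O2 : mset) : mset :=
  flat_map (fun m1 =>
    flat_map (fun m2 => if dec (compatible m1 m2) then [munion m1 m2] else [])
      O2) O1.

Definition munion_ms (O1 O2 : mset) : mset := O1 ++ O2.

Definition diffF (F : formula) (O1 O2 : mset) : mset :=
  filter (fun m1 => dec (forall m2, In m2 O2 ->
            ~ compatible m1 m2 \/
            (compatible m1 m2 /\ feval (munion m1 m2) F = TFalse))) O1.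

Definition leftjoin (F : formula) (O1 O2 : mset) : mset :=
  munion_ms (sel F (join O1 O2)) (diffF F O1 O2).

Definition sdiff (O1 O2 : mset) : mset :=
  filter (fun m1 => dec (forall m2, In m2 O2 -> ~ compatible m1 m2)) O1.

(** Expressions of the core SPARQL algebra (projection, selection, join,
    union, simple difference) over two input multisets. *)
Inductive cexpr : Type :=
| EIn1  : cexpr
| EIn2  : cexpr
| EProj : (V -> Prop) -> cexpr -> cexpr
| ESel  : formula -> cexpr -> cexpr
| EJoin : cexpr -> cexpr -> cexpr
| EUnion : cexpr -> cexpr -> cexpr
| EDiff : cexpr -> cexpr -> cexpr.

Fixpoint ceval (e : cexpr) (O1 O2 : mset) : mset :=
  match e with
  | EIn1 => O1
  | EIn2 => O2
  | EProj W e1 => proj W (ceval e1 O1 O2)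
  | ESel F e1 => sel F (ceval e1 O1 O2)
  | EJoin e1 e2 => join (ceval e1 O1 O2) (ceval e2 O1 O2)
  | EUnion e1 e2 => munion_ms (ceval e1 O1 O2) (ceval e2 O1 O2)
  | EDiff e1 e2 => sdiff (ceval e1 O1 O2) (ceval e2 O1 O2)
  end.

End Sparql.

(* Main.v *)
Require Import Defs.
From Stdlib Require Import List Classical ClassicalEpsilon Lia.
Import ListNotations.

Section Proof.
Variables (I L V : Type).

Lemma dec_true (P : Prop) : dec P = true <-> P.
Proof. unfold dec; destruct (excluded_middle_informative P); split; intuition; discriminate. Qed.
Lemma dec_false (P : Prop) : dec P = false <-> ~P.
Proof. unfold dec; destruct (excluded_middle_informative P); split; intuition; discriminate. Qed.
Lemma dec_iff (P Q : Prop) : (P <-> Q) -> dec P = dec Q.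
Proof. intros H; unfold dec; destruct (excluded_middle_informative P), (excluded_middle_informative Q);
  try reflexivity; exfalso; tauto. Qed.

Lemma card_app (a b : mset I L V) m : card (a ++ b) m = card a m + card b m.
Proof. unfold card. rewrite filter_app, length_app. reflexivity. Qed.

Lemma card_filter_split (p q r : mapping I L V -> bool) O m :
  (forall x, r x = negb (q x)) ->
  card (filter p (filter q O)) m + card (filter p (filter r O)) m = card (filter p O) m.
Proof.
  intros H; unfold card; induction O as [|a O IH]; simpl; auto.
  rewrite H. destruct (q a); simpl; destruct (p a); simpl; try destruct (dec (a = m)); simpl; lia.
Qed.

Fixpoint fv (F : formula I L V) : list V := match F with
| FEqC x _ => [x] | FEqV _ _ x y => [x;y] | FBound _ _ x => [x]
| FAnd a b | FOr a b => fv a ++ fv b | FNot a => fv a end.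

Lemma feval_local F (m m' : mapping I L V) :
  (forall v, In v (fv F) -> m v = m' v) -> feval m F = feval m' F.
Proof.
  induction F; simpl; intros H;
  repeat match goal with |- context[m ?x] => rewrite (H x) by (simpl; auto) end;
  try reflexivity.
  - rewrite IHF1, IHF2; auto; intros; apply H; apply in_or_app; auto.
  - rewrite IHF1, IHF2; auto; intros; apply H; apply in_or_app; auto.
  - rewrite IHF; auto.
Qed.

Fixpoint trfa (F : formula I L V) : formula I L V * formula I L V := match F with
| FEqC x c => (FAnd (FBound I L x) (FEqC x c), FAnd (FBound I L x) (FNot (FEqC x c)))
| FEqV _ _ x y => (FAnd (FAnd (FBound I L x) (FBound I L y)) (FEqV I L x y),
               FAnd (FAnd (FBound I L x) (FBound I L y)) (FNot (FEqV I L x y)))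
| FBound _ _ x => (FBound I L x, FNot (FBound I L x))
| FAnd a b => (FAnd (fst (trfa a)) (fst (trfa b)), FOr (snd (trfa a)) (snd (trfa b)))
| FOr a b => (FOr (fst (trfa a)) (fst (trfa b)), FAnd (snd (trfa a)) (snd (trfa b)))
| FNot a => (snd (trfa a), fst (trfa a))
end.
Definition istr t := match t with TTrue => TTrue | _ => TFalse end.
Definition isfa t := match t with TFalse => TTrue | _ => TFalse end.

Lemma trfa_ok F (m : mapping I L V) :
  feval m (fst (trfa F)) = istr (feval m F) /\ feval m (snd (trfa F)) = isfa (feval m F).
Proof.
  induction F; simpl.
  - destruct (m v); simpl; [destruct (dec _)|]; auto.
  - destruct (m v), (m v0); simpl; try destruct (dec _); auto.
  - destruct (m v); auto.
  - destruct IHF1 as [A B], IHF2 as [C D]; rewrite A,B,C,D;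
    destruct (feval m F1), (feval m F2); auto.
  - destruct IHF1 as [A B], IHF2 as [C D]; rewrite A,B,C,D;
    destruct (feval m F1), (feval m F2); auto.
  - destruct IHF as [A B]; rewrite A, B; destruct (feval m F); auto.
Qed.

Definition G (F : formula I L V) : formula I L V := FNot (snd (trfa F)).

Lemma G_ok F (m : mapping I L V) : feval m (G F) = TTrue <-> feval m F <> TFalse.
Proof.
  unfold G; simpl; destruct (trfa_ok F m) as [_ B]; rewrite B.
  destruct (feval m F); simpl; split; intro H; try congruence; exfalso; apply H; reflexivity.
Qed.

Definition samepat (T : list V) (O : mset I L V) :=
  forall m m', In m O -> In m' O -> forall v, In v T -> (m v = None <-> m' v = None).

Lemma base F (O O2 : mset I L V) :
  samepat (fv F) O -> sdiff O (sel (G F) (join O O2)) = diffF F O O2.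
Proof.
  intros HP. unfold sdiff, diffF; apply filter_ext_in; intros m1 Hm1; apply dec_iff; split.
  - intros H m2 Hm2. destruct (classic (compatible m1 m2)) as [C|C]; [|left; auto].
    right; split; auto.
    destruct (feval (munion m1 m2) F) eqn:E; auto; exfalso;
    (apply (H (munion m1 m2));
     [ unfold sel; apply filter_In; split;
       [ apply in_flat_map; exists m1; split; auto; apply in_flat_map; exists m2; split; auto;
         rewrite (proj2 (dec_true _) C); simpl; auto
       | apply dec_true, G_ok; congruence ]
     | intros x t1 t2 H1 H2; unfold munion in H2; rewrite H1 in H2; congruence ]).
  - intros H m Hm Cm. unfold sel in Hm. apply filter_In in Hm as [Hm Gm].
    apply in_flat_map in Hm as [m1' [Hm1' Hm]]. apply in_flat_map in Hm as [m2 [Hm2 Hm]].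
    destruct (dec (compatible m1' m2)) eqn:D; [|inversion Hm].
    simpl in Hm; destruct Hm as [<-|[]]. apply (proj1 (dec_true _)) in D. apply (proj1 (dec_true _)), G_ok in Gm.
    assert (C : compatible m1 m2).
    { intros x t1 t2 H1 H2. destruct (m1' x) as [s|] eqn:E.
      - assert (s = t2) by (eapply D; eauto). subst.
        apply (Cm x); auto. unfold munion; rewrite E; auto.
      - apply (Cm x); auto. unfold munion; rewrite E; auto. }
    destruct (H m2 Hm2) as [h|[_ h]]; [contradiction|].
    apply Gm. rewrite <- h. apply feval_local. intros v Hv. unfold munion.
    destruct (m1 v) as [s|] eqn:E1.
    + destruct (m1' v) as [s'|] eqn:E1'.
      * f_equal. symmetry. apply (Cm v); auto. unfold munion; rewrite E1'; auto.
      * exfalso. assert (m1 v = None) by (apply (HP m1 m1' Hm1 Hm1' v Hv); auto). congruence.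
    + assert (m1' v = None) by (apply (HP m1 m1' Hm1 Hm1' v Hv); auto). rewrite H0; auto.
Qed.

Fixpoint Dx (F : formula I L V) (S : list V) (e1 : cexpr I L V) : cexpr I L V :=
 match S with
 | [] => EDiff e1 (ESel (G F) (EJoin e1 (EIn2 I L V)))
 | v :: S' => EUnion (Dx F S' (ESel (FBound I L v) e1)) (Dx F S' (ESel (FNot (FBound I L v)) e1))
 end.

Lemma Dx_ok F S : forall T e1 O1 O2,
  (forall v, In v (fv F) -> In v T \/ In v S) -> samepat T (ceval e1 O1 O2) ->
  mset_eq (ceval (Dx F S e1) O1 O2) (diffF F (ceval e1 O1 O2) O2).
Proof.
  induction S as [|v S IH]; intros T e1 O1 O2 HT HP.
  - simpl. rewrite base. intros m; reflexivity.
    intros m m' Hm Hm' x Hx. apply HP; auto. destruct (HT x Hx) as [h|[]]; auto.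
  - intros m. simpl ceval. unfold munion_ms. rewrite card_app.
    assert (HT1 : forall x, In x (fv F) -> In x (v::T) \/ In x S).
    { intros x Hx. destruct (HT x Hx) as [h|[h|h]]; simpl; auto. }
    rewrite (IH (v::T) _ O1 O2 HT1), (IH (v::T) _ O1 O2 HT1).
    + unfold diffF, sel. apply card_filter_split.
      intros x; simpl. destruct (x v); simpl.
      * rewrite (proj2 (dec_true (TTrue = TTrue))) by reflexivity.
        rewrite (proj2 (dec_false (TFalse = TTrue))) by discriminate. reflexivity.
      * rewrite (proj2 (dec_true (TTrue = TTrue))) by reflexivity.
        rewrite (proj2 (dec_false (TFalse = TTrue))) by discriminate. reflexivity.
    + simpl. intros m1 m1' H1 H1' x Hx. unfold sel in H1, H1'.
      apply filter_In in H1 as [H1 D1]; apply filter_In in H1' as [H1' D1'].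
      apply (proj1 (dec_true _)) in D1; apply (proj1 (dec_true _)) in D1'. simpl in D1, D1'.
      destruct Hx as [<-|Hx]; [|apply HP; auto].
      destruct (m1 v), (m1' v); simpl in *; try discriminate; split; intros; congruence.
    + simpl. intros m1 m1' H1 H1' x Hx. unfold sel in H1, H1'.
      apply filter_In in H1 as [H1 D1]; apply filter_In in H1' as [H1' D1'].
      apply (proj1 (dec_true _)) in D1; apply (proj1 (dec_true _)) in D1'. simpl in D1, D1'.
      destruct Hx as [<-|Hx]; [|apply HP; auto].
      destruct (m1 v), (m1' v); simpl in *; try discriminate; split; intros; congruence.
Qed.

End Proof.

Theorem lemma2 (I L V : Type)
  (HI : infinite_type I) (HL : infinite_type L) (HV : infinite_type V) :
  forall F : formula I L V,
  exists e : cexpr I L V,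
  forall O1 O2 : mset I L V,
    mset_eq (ceval e O1 O2) (leftjoin F O1 O2).
Proof.
  intros F. exists (@EUnion I L V (@ESel I L V F (@EJoin I L V (EIn1 I L V) (EIn2 I L V))) (@Dx I L V F (@fv I L V F) (EIn1 I L V))).
  intros O1 O2 m. simpl. unfold leftjoin, munion_ms. rewrite !card_app. f_equal.
  apply (Dx_ok _ _ _ F (@fv I L V F) [] (EIn1 I L V) O1 O2).
  - intros v Hv; right; auto.
  - intros m1 m1' _ _ x [].
Qed.
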